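(* Let $n\ge3$, $k\ge0$, let $S\subseteq\mathrm{Inc}(A,B)$ be an independent set in $G_n^k$, and let $i\in[n+k]$. Then (1) $\mathrm{DFEL}(i,S)$ is a subset of $\mathrm{Inc}(A,B)$ that is independent in $G_n^k$; (2) $\mathrm{DLEF}(i,S)$ is a subset of $\mathrm{Inc}(A,B)$ that is independent in $G_n^k$; (3) $|\mathrm{DFEL}(i,S)|+|\mathrm{DLEF}(i,S)|=2|S|$.
   Context: For integers $n\ge3$, $k\ge0$, the crown $S_n^k$ is the poset with ground set $A\cup B$, $A=\{a_1,\dots,a_{n+k}\}$, $B=\{b_1,\dots,b_{n+k}\}$, indices cyclic modulo $n+k$; elements of $A$ are pairwise incomparable, as are elements of $B$, and $a_i$ is incomparable to $b_j$ when $j\in\{i,\dots,i+k\}$ (mod $n+k$), while $a_i<b_j$ otherwise. $\mathrm{Inc}(A,B)$ is the set of pairs $(a,b)\in A\times B$ with $a$ incomparable to $b$; $G_n^k$ has vertex set $\mathrm{Inc}(A,B)$ with $(a,b)$ adjacent to $(x,y)$ iff $a<y$ and $x<b$. For an independent $S$ and $i\in[n+k]$, an ordered pair $((a,b),(x,y))$ of elements of $S$ is an expansion blocking pair at $i$ if $a=a_i$, $y=b_{i+k}$, and $x<b$ in $S_n^k$. $\mathrm{FEBP}(i,S)$ is the set of $(a,b)\in S$ for which some $(x,y)\in S$ makes $((a,b),(x,y))$ an expansion blocking pair at $i$; $\mathrm{LEBP}(i,S)$ is the set of $(x,y)\in S$ for which some $(a,b)\in S$ makes $((a,b),(x,y))$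 an expansion blocking pair at $i$. Define $\mathrm{DFEL}(i,S)=(S-\mathrm{FEBP}(i,S))\cup\{(x,b_{i+k+1}):(x,b_{i+k})\in\mathrm{LEBP}(i,S)\}$ and $\mathrm{DLEF}(i,S)=(S-\mathrm{LEBP}(i,S))\cup\{(a_{i-1},b):(a_i,b)\in\mathrm{FEBP}(i,S)\}$. *)

(* Defs.v *)
From mathcomp Require Import all_boot.
Set Implicit Arguments. Unset Strict Implicit. Unset Printing Implicit Defensive.

(* Indices are 'I_(n+k) = {0,...,n+k-1}, read cyclically
   (index i stands for the paper's index i+1).  a_i is encoded by i : 'I_(n+k)
   in its role as an A-element, b_j by j in its role as a B-element.
   A vertex (a_i, b_j) of G_n^k / an element of A x B is a pair (i, j). *)

Section Crown.
Variables n k : nat.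
Local Notation N := (n + k).
Local Notation I := 'I_N.

(* a_i || b_j  iff  j \in {i, ..., i+k} (mod n+k) *)
Definition crown_inc (i j : I) : bool := (j + N - i) %% N <= k.
Definition crown_lt (i j : I) : bool := ~~ crown_inc i j.

Definition IncAB : {set I * I} := [set p | crown_inc p.1 p.2].

Definition Gadj (p q : I * I) : bool := crown_lt p.1 q.2 && crown_lt q.1 p.2.

Definition indepG (S : {set I * I}) : Prop :=
  S \subset IncAB /\ {in S &, forall p q, ~~ Gadj p q}.

Definition idx_add (i : I) (m : nat) : I := iter m (@ordS N) i.
Definition idx_pred (i : I) : I := @ord_pred N i.

Definition ebp (i : I) (p q : I * I) : bool :=
  [&& p.1 == i, q.2 == idx_add i k & crown_lt q.1 p.2].

Definition FEBP (i : I) (S : {set I * I}) : {set I * I} :=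
  [set p in S | [exists q in S, ebp i p q]].
Definition LEBP (i : I) (S : {set I * I}) : {set I * I} :=
  [set q in S | [exists p in S, ebp i p q]].

Definition DFEL (i : I) (S : {set I * I}) : {set I * I} :=
  (S :\: FEBP i S) :|: [set (q.1, idx_add i k.+1) | q in LEBP i S].
Definition DLEF (i : I) (S : {set I * I}) : {set I * I} :=
  (S :\: LEBP i S) :|: [set (idx_pred i, p.2) | p in FEBP i S].
End Crown.

(* Main.v *)
Require Import Defs.
From mathcomp Require Import all_boot zify.

Section Ar.
Variables n k : nat.
Hypothesis hn : 3 <= n.
Local Notation N := (n + k).

Lemma mod2 x : x < N + N -> x %% N = if x < N then x else x - N.
Proof.
case: ifP => h; first by rewrite modn_small.
move=> h2; have -> : x = (x - N) + N by lia.
rewrite modnDr modn_small; lia.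
Qed.

Lemma idx_addE (i : 'I_N) m : (idx_add i m : nat) = (i + m) %% N.
Proof.
elim: m => [|m IH]; first by rewrite addn0 modn_small.
rewrite /idx_add iterS /= -/(idx_add i m) IH -addn1 modnDml addn1 addnS //.
Qed.

Lemma idx_addE' (i : 'I_N) m : m < N ->
  ((i + m < N) /\ (idx_add i m : nat) = i + m) \/
  ((N <= i + m) /\ (idx_add i m : nat) = i + m - N).
Proof.
move=> hm; rewrite idx_addE mod2; last by have := ltn_ord i; lia.
case: ifP => h; [left|right]; split => //; lia.
Qed.

Lemma idx_predE (i : 'I_N) :
  (i = 0 :> nat /\ (idx_pred i : nat) = N - 1) \/
  (0 < i /\ (idx_pred i : nat) = i - 1).
Proof.
rewrite /idx_pred /ord_pred /=.
have hi := ltn_ord i.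
rewrite mod2; last by lia.
case: ifP => h; [left|right]; lia.
Qed.

Lemma incE (i j : 'I_N) : crown_inc i j <->
  (i <= j /\ j <= i + k) \/ (j < i /\ j + N <= i + k).
Proof.
rewrite /crown_inc.
have hi := ltn_ord i; have hj := ltn_ord j.
rewrite mod2; last by lia.
case: ifP => h; split; lia.
Qed.

Ltac facts i :=
  let h1 := fresh in let h2 := fresh in let h3 := fresh in
  have h1 := @idx_addE' i k ltac:(lia);
  have h2 := @idx_addE' i k.+1 ltac:(lia);
  have h3 := idx_predE i.

Lemma ltE (i j : 'I_N) : crown_lt i j <->
  ~ ((i <= j /\ j <= i + k) \/ (j < i /\ j + N <= i + k)).
Proof. rewrite /crown_lt -incE; split; [move/negP|move=>?; apply/negP]; done. Qed.

Lemma La (i : 'I_N) : crown_lt i (idx_add i k.+1).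
Proof. apply/ltE; facts i; have := ltn_ord i; lia. Qed.

Lemma Lb (i : 'I_N) : crown_lt (idx_pred i) (idx_add i k).
Proof. apply/ltE; facts i; have := ltn_ord i; lia. Qed.

Lemma Lc (i x : 'I_N) : crown_inc x (idx_add i k) -> x != i ->
  crown_inc x (idx_add i k.+1).
Proof.
move=> /incE h /eqP hne; apply/incE.
have hne' : (x : nat) <> i by move=> e; apply: hne; apply: ord_inj.
facts i; have := ltn_ord i; have := ltn_ord x; lia.
Qed.

Lemma Ld (i x : 'I_N) : crown_inc x (idx_add i k) ->
  crown_lt x (idx_add i k.+1) -> x = i.
Proof.
move=> /incE h /ltE h'; apply: ord_inj.
facts i; have := ltn_ord i; have := ltn_ord x; lia.
Qed.

Lemma Le (i b : 'I_N) : crown_inc i b -> b != idx_add i k ->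
  crown_inc (idx_pred i) b.
Proof.
move=> /incE h /eqP hne; apply/incE.
have hne' : (b : nat) <> idx_add i k by move=> e; apply: hne; apply: ord_inj.
facts i; have := ltn_ord i; have := ltn_ord b; lia.
Qed.

Lemma Lf (i b : 'I_N) : crown_inc i b ->
  crown_lt (idx_pred i) b -> b = idx_add i k.
Proof.
move=> /incE h /ltE h'; apply: ord_inj.
facts i; have := ltn_ord i; have := ltn_ord b; lia.
Qed.

End Ar.
Set Implicit Arguments. Unset Strict Implicit.

Section Main.
Variables n k : nat.
Hypothesis hn : 3 <= n.
Local Notation N := (n + k).
Variable S : {set 'I_N * 'I_N}.
Variable i : 'I_N.
Hypothesis HS : indepG S.
Local Notation K := (idx_add i k).
Local Notation K1 := (idx_add i k.+1).
Local Notation P := (idx_pred i).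

Lemma GadjC (p q : 'I_N * 'I_N) : Gadj p q = Gadj q p.
Proof. by rewrite /Gadj andbC. Qed.

Lemma incS p : p \in S -> crown_inc p.1 p.2.
Proof. by case: HS => /subsetP h _ /h; rewrite inE. Qed.

Lemma indS p q : p \in S -> q \in S -> ~~ Gadj p q.
Proof. by case: HS => _ h; apply: h. Qed.

Lemma memF p : p \in FEBP i S -> p \in S /\ exists2 q, q \in S & ebp i p q.
Proof. by rewrite inE => /andP [pS /existsP [q /andP [qS e]]]; split => //; exists q. Qed.

Lemma memL q : q \in LEBP i S -> q \in S /\ exists2 p, p \in S & ebp i p q.
Proof. by rewrite inE => /andP [pS /existsP [p /andP [qS e]]]; split => //; exists p. Qed.

Lemma ebpE p q : ebp i p q -> [/\ p.1 = i, q.2 = K & crown_lt q.1 p.2].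
Proof. by case/and3P => /eqP -> /eqP -> ->. Qed.

Lemma newL q : q \in LEBP i S -> crown_inc q.1 K1.
Proof.
case/memL => qS [p pS /ebpE [e1 e2 lt]].
apply: Lc => //; first by rewrite -e2; apply: incS.
apply/eqP => e; move: lt; rewrite e -e1 /crown_lt (incS pS) //.
Qed.

Lemma newF p : p \in FEBP i S -> crown_inc P p.2.
Proof.
case/memF => pS [q qS /ebpE [e1 e2 lt]].
apply: Le => //; first by rewrite -e1; apply: incS.
apply/eqP => e; move: lt; rewrite e -e2 /crown_lt (incS qS) //.
Qed.

Lemma oldnewL p q : p \in S -> p \notin FEBP i S -> q \in LEBP i S ->
  ~~ Gadj p (q.1, K1).
Proof.
move=> pS pF qL; case: (memL qL) => qS _.
apply/negP => /andP [/= h1 h2].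
have := indS pS qS; rewrite /Gadj h2 andbT /crown_lt negbK.
case/memL: qL => _ [p0 p0S /ebpE [e1 e2 _]].
rewrite e2 => hi; have ea := @Ld n k hn _ _ hi h1.
move/negP: pF; apply; rewrite inE pS; apply/existsP; exists q.
by rewrite qS /ebp ea eqxx e2 eqxx.
Qed.

Lemma oldnewF p q : q \in S -> q \notin LEBP i S -> p \in FEBP i S ->
  ~~ Gadj q (P, p.2).
Proof.
move=> qS qL pF; case: (memF pF) => pS _.
apply/negP => /andP [/= h1 h2].
have := indS pS qS; rewrite /Gadj h1 andbT /crown_lt negbK.
case/memF: pF => _ [q0 q0S /ebpE [e1 e2 _]].
rewrite e1 => hi; have eb := @Lf n k hn _ _ hi h2.
move/negP: qL; apply; rewrite inE qS; apply/existsP; exists p.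
by rewrite pS /ebp e1 eqxx eb eqxx.
Qed.

Lemma part1 : indepG (DFEL i S).
Proof.
case: HS => Ssub Sind; split.
  apply/subsetP => p; rewrite in_setU in_setD => /orP [/andP [_ pS]|/imsetP [q qL ->]].
    by move/subsetP: Ssub => /(_ p pS).
  by rewrite inE /=; apply: newL.
move=> p q; rewrite !in_setU !in_setD => /orP [/andP [pF pS]|/imsetP [p' pL ->]]
  /orP [/andP [qF qS]|/imsetP [q' qL ->]].
- exact: Sind.
- exact: oldnewL.
- by rewrite GadjC; apply: oldnewL.
- by rewrite /Gadj /= /crown_lt (newL pL).
Qed.

Lemma part2 : indepG (DLEF i S).
Proof.
case: HS => Ssub Sind; split.
  apply/subsetP => p; rewrite in_setU in_setD => /orP [/andP [_ pS]|/imsetP [q qL ->]].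
    by move/subsetP: Ssub => /(_ p pS).
  by rewrite inE /=; apply: newF.
move=> p q; rewrite !in_setU !in_setD => /orP [/andP [pF pS]|/imsetP [p' pL ->]]
  /orP [/andP [qF qS]|/imsetP [q' qL ->]].
- exact: Sind.
- exact: oldnewF.
- by rewrite GadjC; apply: oldnewF.
- by rewrite /Gadj /= /crown_lt (newF pL) (newF qL).
Qed.

Lemma cardDFEL : #|DFEL i S| = #|S| - #|FEBP i S| + #|LEBP i S|.
Proof.
have FS : FEBP i S \subset S by apply/subsetP => p /memF [].
rewrite /DFEL cardsU cardsD (setIidPr FS).
have -> : (S :\: FEBP i S) :&: [set (q.1, K1) | q in LEBP i S] = set0.
  apply/setP => x; rewrite !inE; apply/negP => /andP [/andP [_ xS] /imsetP [q qL ex]].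
  case/memL: (qL) => qS [p pS /ebpE [e1 e2 lt]].
  have := indS pS xS; rewrite ex /Gadj /= lt andbT e1 /crown_lt.
  by rewrite negbK => h; have := @La n k hn i; rewrite /crown_lt h.
rewrite cards0 subn0 card_in_imset //.
move=> [x y] [x' y'] /memL [_ [_ _ /ebpE [_ /= e _]]] /memL [_ [_ _ /ebpE [_ /= e' _]]].
by case => ->; rewrite e e'.
Qed.

Lemma cardDLEF : #|DLEF i S| = #|S| - #|LEBP i S| + #|FEBP i S|.
Proof.
have LS : LEBP i S \subset S by apply/subsetP => p /memL [].
rewrite /DLEF cardsU cardsD (setIidPr LS).
have -> : (S :\: LEBP i S) :&: [set (P, p.2) | p in FEBP i S] = set0.
  apply/setP => x; rewrite !inE; apply/negP => /andP [/andP [_ xS] /imsetP [p pF ex]].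
  case/memF: (pF) => pS [q qS /ebpE [e1 e2 lt]].
  have := indS xS qS; rewrite ex /Gadj /= lt andbT e2.
  by have := @Lb n k hn i; rewrite /crown_lt => ->.
rewrite cards0 subn0 card_in_imset //.
move=> [x y] [x' y'] /memF [_ [_ _ /ebpE [/= e _ _]]] /memF [_ [_ _ /ebpE [/= e' _ _]]].
by case => ->; rewrite e e'.
Qed.

Lemma part3 : #|DFEL i S| + #|DLEF i S| = 2 * #|S|.
Proof.
have FS : #|FEBP i S| <= #|S| by apply/subset_leq_card/subsetP => p /memF [].
have LS : #|LEBP i S| <= #|S| by apply/subset_leq_card/subsetP => p /memL [].
rewrite cardDFEL cardDLEF; lia.
Qed.

End Main.

Theorem lemma4p8 (n k : nat) (hn : 3 <= n) (S : {set 'I_(n + k) * 'I_(n + k)})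
  (i : 'I_(n + k)) :
  indepG S ->
  [/\ indepG (DFEL i S), indepG (DLEF i S)
    & #|DFEL i S| + #|DLEF i S| = 2 * #|S|].
Proof.
move=> HS; split.
- exact: part1.
- exact: part2.
- exact: part3.
Qed.
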